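(* If a sign string $S$ and a state string $J$ of length $n$ correspond to a dominant lattice path, then the growth algorithm applied to $(S,J)$ does not terminate until the sign and state strings have length $0$.
   Context: A sign string is $S=(s_1,\dots,s_n)\in\{+,-\}^n$ and a state string is $J=(j_1,\dots,j_n)\in\{-1,0,1\}^n$. Weights: let $\alpha_1,\alpha_2$ be the simple roots and $\mu^+,\mu^-$ the fundamental weights of $\mathfrak{sl}(3)$; put $\mathrm{wt}(e^+_1)=\mu^+$, $\mathrm{wt}(e^+_0)=\mu^+-\alpha_1$, $\mathrm{wt}(e^+_{-1})=\mu^+-\alpha_1-\alpha_2$, $\mathrm{wt}(e^-_1)=\mu^-$, $\mathrm{wt}(e^-_0)=\mu^--\alpha_2$, $\mathrm{wt}(e^-_{-1})=\mu^--\alpha_1-\alpha_2$. The pair $(S,J)$ determines the lattice path $\pi_0=0$, $\pi_k=\pi_{k-1}+\mathrm{wt}(e^{s_k}_{j_k})$; it is dominant if every $\pi_k$ is a nonnegative integral combination of $\mu^+,\mu^-$ and $\pi_n=0$. The growth algorithm builds an oriented planar graph downward from $n$ parallel strands, keeping a current pair (sign string, state string). A replacement acts on two adjacent positions $k,k+1$ with current signs $(s,s')$ and states $(j,j')$: (a) If $s'\ne s$: if $(j,j')=(1,0)$, $(0,0)$ or $(0,-1)$, attach an ''H'' (two trivalent vertices joined by a horizontal edge, each joined to its strand above and a new strand below); the new signs are $(s',s)$ and the new states respectively $(0,1)$, $(-1,1)$, $(-1,0)$. If $(j,j')=(1,-1)$, join the two strands by a cup and delete both positions. (b) If $s'=s$: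 if $(j,j')=(1,0)$, $(0,-1)$ or $(1,-1)$, attach a ''Y'' (the two strands meet at a trivalent vertex whose third edge continues downward); the two positions are replaced by one position with sign opposite to $s$ and state respectively $1$, $-1$, $0$. The algorithm repeatedly applies some applicable replacement and stops when none applies. *)

(* Defs.v *)
From Stdlib Require Import List ZArith Relations.
Import ListNotations.
Open Scope Z_scope.

Inductive sign := Plus | Minus.
Inductive state := S1 | S0 | Sm1.

Definition opp_sign (s : sign) : sign :=
  match s with Plus => Minus | Minus => Plus end.

(* Weights of sl(3) written in the basis of fundamental weights (mu+, mu-). *)
Definition weight := (Z * Z)%type.
Definition wadd (a b : weight) : weight := (fst a + fst b, snd a + snd b).
Definition wsub (a b : weight) : weight := (fst a - fst b, snd a - snd b).
Definition mu_plus  : weight := (1, 0).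
Definition mu_minus : weight := (0, 1).
(* simple roots via the Cartan matrix of sl(3): alpha1 = 2mu+ - mu-, alpha2 = -mu+ + 2mu- *)
Definition alpha1 : weight := (2, -1).
Definition alpha2 : weight := (-1, 2).

Definition wt (s : sign) (j : state) : weight :=
  match s, j with
  | Plus, S1  => mu_plus
  | Plus, S0  => wsub mu_plus alpha1
  | Plus, Sm1 => wsub (wsub mu_plus alpha1) alpha2
  | Minus, S1  => mu_minus
  | Minus, S0  => wsub mu_minus alpha2
  | Minus, Sm1 => wsub (wsub mu_minus alpha1) alpha2
  end.

Definition dominant_weight (w : weight) : Prop := 0 <= fst w /\ 0 <= snd w.

Fixpoint path_from (p : weight) (S : list sign) (J : list state) : list weight :=
  match S, J with
  | s :: S', j :: J' => p :: path_from (wadd p (wt s j)) S' J'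
  | _, _ => [p]
  end.

Definition lattice_path (S : list sign) (J : list state) : list weight :=
  path_from (0, 0) S J.

Definition endpoint (S : list sign) (J : list state) : weight :=
  last (lattice_path S J) (0, 0).

Definition dominant_path (S : list sign) (J : list state) : Prop :=
  length S = length J /\
  Forall dominant_weight (lattice_path S J) /\
  endpoint S J = (0, 0).

(* Local replacement rules on two adjacent positions with signs (s,s')
   and states (j,j'); the result is the new (sign string, state string)
   that replaces these two positions. *)
Inductive local_rule : sign -> sign -> state -> state ->
                       list sign -> list state -> Prop :=
  | rule_H1 s s' : s' <> s -> local_rule s s' S1 S0  [s'; s] [S0; S1]
  | rule_H2 s s' : s' <> s -> local_rule s s' S0 S0  [s'; s] [Sm1; S1]
  | rule_H3 s s' : s' <> s -> local_rule s s' S0 Sm1 [s'; s] [Sm1; S0]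
  | rule_cup s s' : s' <> s -> local_rule s s' S1 Sm1 [] []
  | rule_Y1 s : local_rule s s S1 S0  [opp_sign s] [S1]
  | rule_Y2 s : local_rule s s S0 Sm1 [opp_sign s] [Sm1]
  | rule_Y3 s : local_rule s s S1 Sm1 [opp_sign s] [S0].

Inductive growth_step : (list sign * list state) -> (list sign * list state) -> Prop :=
  | gstep S1' S2' J1' J2' s s' j j' Snew Jnew :
      length S1' = length J1' ->
      local_rule s s' j j' Snew Jnew ->
      growth_step (S1' ++ s :: s' :: S2', J1' ++ j :: j' :: J2')
                  (S1' ++ Snew ++ S2', J1' ++ Jnew ++ J2').

Definition growth_reachable := clos_refl_trans _ growth_step.

Definition growth_terminal (c : list sign * list state) : Prop :=
  forall c', ~ growth_step c c'.

(* Main.v *)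
Require Import Defs.
From Stdlib Require Import List ZArith Relations Lia.
Import ListNotations.
Open Scope Z_scope.

Fixpoint ok (p : weight) (S : list sign) (J : list state) : Prop :=
  match S, J with
  | [], [] => p = (0,0)
  | s :: S', j :: J' => dominant_weight p /\ ok (wadd p (wt s j)) S' J'
  | _, _ => False
  end.

Lemma ok_ext p q S J : p = q -> ok p S J -> ok q S J.
Proof. intros ->; auto. Qed.

Lemma ok_dom p S J : ok p S J -> dominant_weight p.
Proof.
  destruct S, J; simpl; try tauto.
  intros ->. unfold dominant_weight; simpl; lia.
Qed.

Lemma last_cons_path p q S J d :
  last (p :: path_from q S J) d = last (path_from q S J) d.
Proof. destruct S, J; reflexivity. Qed.

Lemma dom_ok : forall S J p, length S = length J ->
  Forall dominant_weight (path_from p S J) ->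
  last (path_from p S J) (0,0) = (0,0) -> ok p S J.
Proof.
  induction S as [|s S IH]; intros [|j J] p HL HF HE; simpl in *; try discriminate.
  - exact HE.
  - inversion HF; subst. split; auto.
    apply IH; auto.
    destruct S, J; simpl in *; try discriminate; exact HE.
Qed.

Lemma step_ok_base s s' j j' Sn Jn S2 J2 p :
  local_rule s s' j j' Sn Jn ->
  ok p (s :: s' :: S2) (j :: j' :: J2) -> ok p (Sn ++ S2) (Jn ++ J2).
Proof.
  intros Hr Hok.
  destruct p as [a b].
  destruct Hr; destruct s; try destruct s'; try congruence;
  simpl in *; unfold dominant_weight, wadd, wsub, mu_plus, mu_minus, alpha1, alpha2 in *; simpl in *;
  destruct Hok as [Hd1 [Hd2 Hrest]];
  repeat split; simpl; try (pose proof (ok_dom _ _ _ Hrest) as Hd3; unfold dominant_weight in Hd3; simpl in Hd3; lia);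
  (eapply ok_ext; [|exact Hrest]; f_equal; lia).
Qed.

Lemma step_ok : forall S1 J1 s s' j j' Sn Jn S2 J2 p,
  length S1 = length J1 -> local_rule s s' j j' Sn Jn ->
  ok p (S1 ++ s :: s' :: S2) (J1 ++ j :: j' :: J2) -> ok p (S1 ++ Sn ++ S2) (J1 ++ Jn ++ J2).
Proof.
  induction S1 as [|x S1 IH]; intros [|y J1] s s' j j' Sn Jn S2 J2 p HL Hr Hok;
    simpl in *; try discriminate.
  - eapply step_ok_base; eauto.
  - destruct Hok as [Hd Hok]. split; auto. eapply IH; eauto.
Qed.

Lemma reach_ok c c' : growth_reachable c c' -> ok (0,0) (fst c) (snd c) -> ok (0,0) (fst c') (snd c').
Proof.
  induction 1; auto.
  destruct H. simpl. apply step_ok; auto.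
Qed.

Lemma allS1 : forall S J pS pJ, length pS = length pJ ->
  growth_terminal (pS ++ S, pJ ++ J) -> length S = length J ->
  forall J', J = S1 :: J' -> Forall (eq S1) J.
Proof.
  induction S as [|s S IH]; intros J pS pJ HL HT HL2 J' HJ; subst J; simpl in *; try discriminate.
  destruct J' as [|j' J'']; [constructor; auto|].
  destruct S as [|s' S]; simpl in *; try discriminate.
  assert (j' = S1).
  { destruct j'; auto; exfalso; destruct s, s';
    (eapply HT; apply gstep; [exact HL|
      first [ apply rule_Y1 | apply rule_Y3 | apply rule_H1; discriminate
            | apply rule_cup; discriminate ]]). }
  subst j'. constructor; auto.
  refine (IH (S1 :: J'') (pS ++ [s]) (pJ ++ [S1]) _ _ _ J'' eq_refl).
  - rewrite !length_app; simpl; lia.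
  - rewrite <- !app_assoc. exact HT.
  - simpl; lia.
Qed.

Lemma sum_S1 : forall S J p, ok p S J -> Forall (eq S1) J ->
  fst p + snd p + Z.of_nat (length J) = 0.
Proof.
  induction S as [|s S IH]; intros [|j J] p Hok HF; simpl in *; try tauto.
  - subst; reflexivity.
  - inversion HF; subst. destruct Hok as [_ Hok].
    specialize (IH _ _ Hok H2). destruct s; simpl in IH; lia.
Qed.

Theorem lemma4 (S : list sign) (J : list state) :
  dominant_path S J ->
  forall S' J', growth_reachable (S, J) (S', J') ->
  growth_terminal (S', J') ->
  S' = nil /\ J' = nil.
Proof.
  intros [HL [HF HE]] S' J' HR HT.
  assert (Hok : ok (0,0) S' J').
  { apply (reach_ok _ _ HR). simpl. apply dom_ok; auto. }
  destruct S' as [|s S'], J' as [|j J']; simpl in Hok; try tauto.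
  destruct Hok as [_ Hok].
  assert (j = S1).
  { pose proof (ok_dom _ _ _ Hok) as Hd. unfold dominant_weight in Hd.
    destruct s, j; simpl in Hd; auto; lia. }
  subst j.
  assert (HL' : length (s :: S') = length (S1 :: J')).
  { clear -Hok. revert Hok. generalize (wadd (0,0) (wt s S1)).
    revert J'. induction S' as [|x S' IH]; intros [|y J'] q H; simpl in *; try tauto.
    f_equal. specialize (IH J' _ (proj2 H)). simpl in IH. congruence. }
  pose proof (allS1 (s :: S') (S1 :: J') [] [] eq_refl HT HL' J' eq_refl) as HA.
  inversion HA; subst.
  pose proof (sum_S1 _ _ _ Hok H2) as Hs. assert (0 <= Z.of_nat (length J')) by lia. destruct s; unfold wadd, wt, mu_plus, mu_minus in Hs; cbn [fst snd] in Hs; lia.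
Qed.
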